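(* Let $P\in\Delta$ and define $Q_0\in\Delta$ by $Q_0(x,y,z)=\frac{P(X=x,Y=y)P(X=x,Z=z)}{P(X=x)}$ if $P(X=x)>0$ and $Q_0(x,y,z)=0$ otherwise. Then $Q_0\in\Delta_P$, and $\widetilde{SI}(X:Y;Z)=0$ if and only if $MI_{Q_0}(Y:Z)=0$.
   Context: $X,Y,Z$ are random variables with finite state spaces $\mathcal X,\mathcal Y,\mathcal Z$. $\Delta$ denotes the set of all probability distributions on $\mathcal X\times\mathcal Y\times\mathcal Z$; $P\in\Delta$ is the joint distribution, and a subscript $Q$ means computed w.r.t. $Q\in\Delta$. $\Delta_P=\{Q\in\Delta: Q(X=x,Y=y)=P(X=x,Y=y)\text{ and }Q(X=x,Z=z)=P(X=x,Z=z)\ \forall x,y,z\}$. $CoI_Q(X;Y;Z)=MI_Q(X:Y)-MI_Q(X:Y|Z)$ and $\widetilde{SI}(X:Y;Z)=\max_{Q\in\Delta_P}CoI_Q(X;Y;Z)$. *)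

(* Defs.v *)
From mathcomp Require Import all_boot.
From Stdlib Require Import Reals ClassicalEpsilon.

Set Implicit Arguments.
Unset Strict Implicit.
Unset Printing Implicit Defensive.

Definition rsum (T : finType) (f : T -> R) : R := \big[Rplus/R0]_(t : T) f t.

Local Open Scope R_scope.
Section Info.
Variables (TX TY TZ : finType).

(* A joint distribution on X x Y x Z, as a function x y z |-> P(X=x,Y=y,Z=z). *)
Definition jdist := TX -> TY -> TZ -> R.

Definition is_dist (Q : jdist) : Prop :=
  (forall x y z, (0 <= Q x y z)%R) /\
  rsum (fun x => rsum (fun y => rsum (fun z => Q x y z))) = 1%R.

Definition mXY (Q : jdist) x y : R := rsum (fun z => Q x y z).
Definition mXZ (Q : jdist) x z : R := rsum (fun y => Q x y z).
Definition mYZ (Q : jdist) y z : R := rsum (fun x => Q x y z).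
Definition mX (Q : jdist) x : R := rsum (fun y => mXY Q x y).
Definition mY (Q : jdist) y : R := rsum (fun x => mXY Q x y).
Definition mZ (Q : jdist) z : R := rsum (fun x => mXZ Q x z).

Definition xlog (p r : R) : R := if Req_EM_T p 0 then 0%R else (p * ln r)%R.

Definition MI_XY (Q : jdist) : R :=
  rsum (fun x => rsum (fun y =>
    xlog (mXY Q x y) (mXY Q x y / (mX Q x * mY Q y)))).

Definition MI_YZ (Q : jdist) : R :=
  rsum (fun y => rsum (fun z =>
    xlog (mYZ Q y z) (mYZ Q y z / (mY Q y * mZ Q z)))).

Definition CMI_XY_Z (Q : jdist) : R :=
  rsum (fun x => rsum (fun y => rsum (fun z =>
    xlog (Q x y z) (Q x y z * mZ Q z / (mXZ Q x z * mYZ Q y z))))).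

Definition CoI (Q : jdist) : R := (MI_XY Q - CMI_XY_Z Q)%R.

Definition DeltaP (P Q : jdist) : Prop :=
  is_dist Q /\
  (forall x y, mXY Q x y = mXY P x y) /\
  (forall x z, mXZ Q x z = mXZ P x z).

Definition is_max_CoI (P : jdist) (v : R) : Prop :=
  (exists Q, DeltaP P Q /\ CoI Q = v) /\
  (forall Q, DeltaP P Q -> (CoI Q <= v)%R).

Definition SItilde (P : jdist) : R :=
  epsilon (inhabits 0%R) (fun v => is_max_CoI P v).

Definition Q0 (P : jdist) : jdist := fun x y z =>
  if Rlt_dec 0 (mX P x) then (mXY P x y * mXZ P x z / mX P x)%R else 0%R.

End Info.

(* Main.v *)
Require Import Defs.
From mathcomp Require Import all_boot.
From Stdlib Require Import Reals.
From mathcomp Require Import all_boot all_algebra.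
From Stdlib Require Import Reals Lra.
From mathcomp Require Import Rstruct.
Import GRing.Theory Num.Theory.

Local Open Scope R_scope.

Section Basic.
Variable A : finType.
Implicit Types f g : A -> R.

Lemma rsum_ext f g : (forall a, f a = g a) -> rsum f = rsum g.
Proof. by move=> H; rewrite /rsum; apply: eq_bigr => i _; apply: H. Qed.

Lemma rsum_plus f g : rsum (fun a => f a + g a) = rsum f + rsum g.
Proof. by rewrite /rsum big_split. Qed.

Lemma rsum_mulr f c : rsum f * c = rsum (fun a => f a * c).
Proof. by rewrite /rsum big_distrl. Qed.

Lemma rsum_mull f c : c * rsum f = rsum (fun a => c * f a).
Proof. by rewrite /rsum big_distrr. Qed.

Lemma rsum_opp f : rsum (fun a => - f a) = - rsum f.
Proof. rewrite /rsum; symmetry; apply: (big_morph Ropp); [move=> x y; exact: Ropp_plus_distr | exact: Ropp_0]. Qed.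

Lemma rsum_le f g : (forall a, f a <= g a) -> rsum f <= rsum g.
Proof.
move=> H; rewrite /rsum; apply/RleP; apply: ler_sum => i _; apply/RleP; exact: H.
Qed.

Lemma rsum_ge0 f : (forall a, 0 <= f a) -> 0 <= rsum f.
Proof.
move=> H; rewrite /rsum; apply/RleP; apply: sumr_ge0 => i _; apply/RleP; exact: H.
Qed.

Lemma rsum_term f a : (forall a, 0 <= f a) -> f a <= rsum f.
Proof.
move=> H; rewrite /rsum (bigD1 a) //=.
have : 0 <= \big[Rplus/R0]_(i | i != a) f i.
  apply/RleP; apply: sumr_ge0 => i _; apply/RleP; exact: H.
move=> h; change (f a <= f a + \big[Rplus/R0]_(i | i != a) f i); lra.
Qed.

Lemma rsum_eq0 f : (forall a, 0 <= f a) -> rsum f = 0 -> forall a, f a = 0.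
Proof.
move=> H H0 a; have := @rsum_term f a H; have := H a; lra.
Qed.
End Basic.

Lemma rsum_exch (A B : finType) (f : A -> B -> R) :
  rsum (fun a => rsum (fun b => f a b)) = rsum (fun b => rsum (fun a => f a b)).
Proof. rewrite /rsum. exact: exchange_big. Qed.

Lemma rsum_pair (A B : finType) (f : A -> B -> R) :
  rsum (fun a => rsum (fun b => f a b)) = rsum (fun p : A * B => f p.1 p.2).
Proof. rewrite /rsum. exact: pair_big. Qed.

Lemma xlogE p r : xlog p r = p * ln r.
Proof. rewrite /xlog; destruct (Req_dec_T p 0) as [e|n]; simpl; [rewrite e; ring | reflexivity]. Qed.

Lemma ln_le_sub1 u : 0 < u -> ln u <= u - 1.
Proof.
move=> hu; have := exp_ineq1_le (ln u); rewrite exp_ln //; lra.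
Qed.

Lemma ln_lt_sub1 u : 0 < u -> u <> 1 -> ln u < u - 1.
Proof.
move=> hu h1; have : ln u <> 0.
  by move=> h; apply: h1; rewrite -(exp_ln u) // h exp_0.
move=> /exp_ineq1; rewrite exp_ln //; lra.
Qed.

Lemma ln_div' a b : 0 < a -> 0 < b -> ln (a / b) = ln a - ln b.
Proof.
move=> ha hb; have hb' : 0 < / b by apply: Rinv_0_lt_compat.
rewrite /Rdiv ln_mult // ln_Rinv //; lra.
Qed.

Lemma gibbs_term p q : 0 <= p -> 0 <= q -> (0 < p -> 0 < q) ->
  p - q <= p * ln (p / q) /\ (p - q = p * ln (p / q) -> p = q).
Proof.
move=> hp hq hpq; case: (Req_dec p 0) => [->|hp0].
  split; [lra|]. rewrite Rmult_0_l; lra.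
have hp' : 0 < p by lra.
have hq' := hpq hp'.
have E : ln (p / q) = - ln (q / p).
  rewrite ln_div' // ln_div' //; lra.
have hqp : 0 < q / p by apply: Rdiv_lt_0_compat.
have Hpq : p * (q / p) = q by field; lra.
split.
  have := @ln_le_sub1 _ hqp; rewrite E => h.
  have : p * ln (q / p) <= p * (q / p - 1) by apply: Rmult_le_compat_l; lra.
  lra.
move=> heq; case: (Req_dec (q / p) 1) => h1.
  have : p * (q / p) = p by rewrite h1; lra. lra.
have := @ln_lt_sub1 _ hqp h1 => h.
have : p * ln (q / p) < p * (q / p - 1) by apply: Rmult_lt_compat_l.
rewrite E in heq; lra.
Qed.

Lemma gibbs (A : finType) (p q : A -> R) :
  (forall a, 0 <= p a) -> (forall a, 0 <= q a) -> (forall a, 0 < p a -> 0 < q a) ->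
  rsum p - rsum q <= rsum (fun a => p a * ln (p a / q a)) /\
  (rsum p - rsum q = rsum (fun a => p a * ln (p a / q a)) -> forall a, p a = q a).
Proof.
move=> hp hq hpq.
set d := fun a => p a * ln (p a / q a) - (p a - q a).
have hd : forall a, 0 <= d a by move=> a; have [h _] := @gibbs_term (p a) (q a) (hp a) (hq a) (@hpq a); rewrite /d; lra.
have E : rsum (fun a => p a * ln (p a / q a)) = rsum d + (rsum p - rsum q).
  rewrite /Rminus -rsum_opp -rsum_plus -rsum_plus; apply: rsum_ext => a; rewrite /d; lra.
split; first by have := @rsum_ge0 _ _ hd; lra.
move=> h a; have h0 : rsum d = 0 by lra.
have := @rsum_eq0 _ _ hd h0 a; rewrite /d => h1.
have [_ h2] := @gibbs_term (p a) (q a) (hp a) (hq a) (@hpq a); apply: h2; lra.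
Qed.

From Stdlib Require Import Reals Lra.
Import GRing.Theory Num.Theory.
Local Open Scope R_scope.
Set Implicit Arguments. Unset Strict Implicit.

Lemma rsum0 (A : finType) : rsum (fun _ : A => 0) = 0.
Proof. rewrite /rsum; exact: big1. Qed.

Section Dist.
Variables (TX TY TZ : finType).
Implicit Types Q : jdist TX TY TZ.

Definition nonnegQ Q := forall x y z, 0 <= Q x y z.

Lemma mXY_ge0 Q : nonnegQ Q -> forall x y, 0 <= mXY Q x y.
Proof. move=> h x y; apply: rsum_ge0 => z; exact: h. Qed.
Lemma mXZ_ge0 Q : nonnegQ Q -> forall x z, 0 <= mXZ Q x z.
Proof. move=> h x z; apply: rsum_ge0 => y; exact: h. Qed.
Lemma mYZ_ge0 Q : nonnegQ Q -> forall y z, 0 <= mYZ Q y z.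
Proof. move=> h y z; apply: rsum_ge0 => x; exact: h. Qed.
Lemma mX_ge0 Q : nonnegQ Q -> forall x, 0 <= mX Q x.
Proof. move=> h x; apply: rsum_ge0 => y; exact: mXY_ge0. Qed.
Lemma mY_ge0 Q : nonnegQ Q -> forall y, 0 <= mY Q y.
Proof. move=> h y; apply: rsum_ge0 => x; exact: mXY_ge0. Qed.
Lemma mZ_ge0 Q : nonnegQ Q -> forall z, 0 <= mZ Q z.
Proof. move=> h z; apply: rsum_ge0 => x; exact: mXZ_ge0. Qed.

Lemma le_mXY Q : nonnegQ Q -> forall x y z, Q x y z <= mXY Q x y.
Proof. move=> h x y z; apply: (@rsum_term _ (fun z => Q x y z)) => w; exact: h. Qed.
Lemma le_mXZ Q : nonnegQ Q -> forall x y z, Q x y z <= mXZ Q x z.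
Proof. move=> h x y z; apply: (@rsum_term _ (fun y => Q x y z)) => w; exact: h. Qed.
Lemma le_mYZ Q : nonnegQ Q -> forall x y z, Q x y z <= mYZ Q y z.
Proof. move=> h x y z; apply: (@rsum_term _ (fun x => Q x y z)) => w; exact: h. Qed.
Lemma le_mX Q : nonnegQ Q -> forall x y, mXY Q x y <= mX Q x.
Proof. move=> h x y; apply: (@rsum_term _ (fun y => mXY Q x y)) => w; exact: mXY_ge0. Qed.
Lemma le_mY Q : nonnegQ Q -> forall x y, mXY Q x y <= mY Q y.
Proof. move=> h x y; apply: (@rsum_term _ (fun x => mXY Q x y)) => w; exact: mXY_ge0. Qed.
Lemma le_mZ Q : nonnegQ Q -> forall x z, mXZ Q x z <= mZ Q z.
Proof. move=> h x z; apply: (@rsum_term _ (fun x => mXZ Q x z)) => w; exact: mXZ_ge0. Qed.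

Lemma mX_XZ Q x : mX Q x = rsum (fun z => mXZ Q x z).
Proof. rewrite /mX /mXY /mXZ; exact: rsum_exch. Qed.
Lemma mY_YZ Q y : mY Q y = rsum (fun z => mYZ Q y z).
Proof. rewrite /mY /mXY /mYZ; exact: rsum_exch. Qed.
Lemma mZ_YZ Q z : mZ Q z = rsum (fun y => mYZ Q y z).
Proof. rewrite /mZ /mXZ /mYZ; exact: rsum_exch. Qed.

Definition totalQ Q := rsum (fun x => rsum (fun y => rsum (fun z => Q x y z))).

Lemma total_X Q : totalQ Q = rsum (fun x => mX Q x).
Proof. by []. Qed.
Lemma total_Y Q : totalQ Q = rsum (fun y => mY Q y).
Proof. rewrite /totalQ /mY /mXY; exact: rsum_exch. Qed.
Lemma total_Z Q : totalQ Q = rsum (fun z => mZ Q z).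
Proof.
rewrite total_X /mZ; under rsum_ext => x do rewrite mX_XZ; exact: rsum_exch.
Qed.
Lemma total_YZ Q : totalQ Q = rsum (fun y => rsum (fun z => mYZ Q y z)).
Proof. rewrite total_Y; apply: rsum_ext => y; exact: mY_YZ. Qed.

Lemma DeltaP_nonneg P Q : DeltaP P Q -> nonnegQ Q.
Proof. by case=> [[]]. Qed.
Lemma DeltaP_X P Q : DeltaP P Q -> forall x, mX Q x = mX P x.
Proof. case=> _ [h _] x; rewrite /mX; apply: rsum_ext => y; exact: h. Qed.
Lemma DeltaP_Y P Q : DeltaP P Q -> forall y, mY Q y = mY P y.
Proof. case=> _ [h _] y; rewrite /mY; apply: rsum_ext => x; exact: h. Qed.
Lemma DeltaP_Z P Q : DeltaP P Q -> forall z, mZ Q z = mZ P z.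
Proof. case=> _ [_ h] z; rewrite /mZ; apply: rsum_ext => x; exact: h. Qed.
Lemma DeltaP_total P Q : DeltaP P Q -> totalQ Q = 1.
Proof. by case=> [[]]. Qed.

Lemma Q0_in (P : jdist TX TY TZ) : is_dist P -> DeltaP P (Q0 P).
Proof.
move=> [hP hP1].
have hxy : forall x y, mXY (Q0 P) x y = mXY P x y.
  move=> x y; rewrite /mXY /Q0.
  case: (Rlt_dec 0 (mX P x)) => hx /=.
    rewrite -/(mXY P x y).
    transitivity (mXY P x y / mX P x * rsum (fun z => mXZ P x z)).
      rewrite rsum_mull; apply: rsum_ext => z; field; lra.
    rewrite -mX_XZ; field; lra.
  rewrite rsum0.
  have h0 : mX P x = 0 by have := mX_ge0 hP x; lra.
  have := le_mX hP x y; have := mXY_ge0 hP x y; rewrite /mXY; lra.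
have hxz : forall x z, mXZ (Q0 P) x z = mXZ P x z.
  move=> x z; change (rsum (fun y => Q0 P x y z) = mXZ P x z); rewrite /Q0.
  case: (Rlt_dec 0 (mX P x)) => hx /=.
    transitivity (mXZ P x z / mX P x * rsum (fun y => mXY P x y)).
      rewrite rsum_mull; apply: rsum_ext => y; field; lra.
    rewrite -/(mX P x); field; lra.
  rewrite rsum0.
  have h0 : mX P x = 0 by have := mX_ge0 hP x; lra.
  have := le_mX hP x; rewrite mX_XZ in h0.
  have := @rsum_eq0 _ _ (mXZ_ge0 hP x) h0 z; rewrite /mXZ; lra.
split; [split|by split].
  move=> x y z; rewrite /Q0; case: Rlt_dec => hx /=; last lra.
  apply: Rmult_le_pos; last by apply: Rlt_le; apply: Rinv_0_lt_compat.
  apply: Rmult_le_pos; [exact: mXY_ge0 | exact: mXZ_ge0].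
rewrite -hP1; apply: rsum_ext => x; apply: rsum_ext => y; exact: hxy.
Qed.

End Dist.

From Stdlib Require Import Reals Lra.
Import GRing.Theory Num.Theory.
Local Open Scope R_scope.
Set Implicit Arguments. Unset Strict Implicit.

Section Info3.
Variables (TX TY TZ : finType).
Implicit Types Q : jdist TX TY TZ.

Definition rsum3 (F : TX -> TY -> TZ -> R) :=
  rsum (fun x => rsum (fun y => rsum (fun z => F x y z))).

Lemma rsum3_ext F G : (forall x y z, F x y z = G x y z) -> rsum3 F = rsum3 G.
Proof. move=> h; do 3 (apply: rsum_ext => ?); exact: h. Qed.

Lemma rsum3_minus F G : rsum3 F - rsum3 G = rsum3 (fun x y z => F x y z - G x y z).
Proof.
rewrite /rsum3 /Rminus -rsum_opp -rsum_plus; apply: rsum_ext => x.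
rewrite -rsum_opp -rsum_plus; apply: rsum_ext => y.
rewrite -rsum_opp -rsum_plus; apply: rsum_ext => z; done.
Qed.

Lemma rsum3_pair F : rsum3 F = rsum (fun t : TX * (TY * TZ) => F t.1 t.2.1 t.2.2).
Proof.
rewrite /rsum3.
transitivity (rsum (fun x => rsum (fun p : TY * TZ => F x p.1 p.2))).
  by apply: rsum_ext => x; rewrite rsum_pair.
exact: (@rsum_pair _ _ (fun x (p : TY * TZ) => F x p.1 p.2)).
Qed.

Lemma rsum3_0 : rsum3 (fun _ _ _ => 0) = 0.
Proof.
rewrite /rsum3 (@rsum_ext _ _ (fun _ => 0)) ?rsum0 // => x.
Qed.

Definition Bf Q x y := mXY Q x y / (mX Q x * mY Q y).
Definition Cf Q y z := mYZ Q y z / (mY Q y * mZ Q z).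
Definition Af Q x y z := Q x y z * mZ Q z / (mXZ Q x z * mYZ Q y z).

Lemma MI_XY_exp Q : MI_XY Q = rsum3 (fun x y z => Q x y z * ln (Bf Q x y)).
Proof.
rewrite /MI_XY /rsum3; apply: rsum_ext => x; apply: rsum_ext => y.
by rewrite xlogE /mXY rsum_mulr.
Qed.

Lemma MI_YZ_exp Q : MI_YZ Q = rsum3 (fun x y z => Q x y z * ln (Cf Q y z)).
Proof.
rewrite /MI_YZ /rsum3.
transitivity (rsum (fun y => rsum (fun x => rsum (fun z => Q x y z * ln (Cf Q y z))))).
  apply: rsum_ext => y; rewrite rsum_exch; apply: rsum_ext => z.
  by rewrite xlogE /mYZ rsum_mulr.
exact: rsum_exch.
Qed.

Lemma CMI_exp Q : CMI_XY_Z Q = rsum3 (fun x y z => Q x y z * ln (Af Q x y z)).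
Proof. rewrite /CMI_XY_Z /rsum3; do 3 (apply: rsum_ext => ?); by rewrite xlogE. Qed.

Lemma pos_of Q x y z : nonnegQ Q -> 0 < Q x y z ->
  0 < mXY Q x y /\ 0 < mXZ Q x z /\ 0 < mYZ Q y z /\
      0 < mX Q x /\ 0 < mY Q y /\ 0 < mZ Q z.
Proof.
move=> h hq.
have h1 := le_mXY h x y z; have h2 := le_mXZ h x y z; have h3 := le_mYZ h x y z.
have h4 := le_mX h x y; have h5 := le_mY h x y; have h6 := le_mZ h x z.
repeat split; lra.
Qed.

Lemma CoI_Q0 (P : jdist TX TY TZ) : is_dist P -> CoI (Q0 P) = MI_YZ (Q0 P).
Proof.
move=> hP; have hD := Q0_in hP; set Q := Q0 P.
have hn : nonnegQ Q := DeltaP_nonneg hD.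
suff : CoI Q - MI_YZ Q = 0 by lra.
rewrite /CoI MI_XY_exp CMI_exp MI_YZ_exp !rsum3_minus.
transitivity (rsum3 (fun _ _ _ => 0)); last first.
  exact: rsum3_0.
apply: rsum3_ext => x y z.
case: (Req_dec (Q x y z) 0) => [->|hq0]; first ring.
have hq : 0 < Q x y z by have := hn x y z; lra.
have [p1 [p2 [p3 [p4 [p5 p6]]]]] := pos_of hn hq.
have eB : Bf Q x y = Af Q x y z * Cf Q y z.
  have hQ : Q x y z = mXY Q x y * mXZ Q x z / mX Q x.
    have hx : 0 < mX P x by rewrite -(DeltaP_X hD).
    rewrite (proj1 (proj2 hD)) (proj2 (proj2 hD)) (DeltaP_X hD) /Q /Q0.
    by case: Rlt_dec.
  rewrite /Bf /Af /Cf hQ; field; repeat repeat split; lra.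
have pA : 0 < Af Q x y z.
  rewrite /Af; apply: Rdiv_lt_0_compat; [nra | nra].
have pC : 0 < Cf Q y z by rewrite /Cf; apply: Rdiv_lt_0_compat; nra.
rewrite eB ln_mult //; ring.
Qed.

Lemma CoI_le0 (P : jdist TX TY TZ) Q :
  (forall y z, mYZ (Q0 P) y z = mY P y * mZ P z) -> DeltaP P Q -> CoI Q <= 0.
Proof.
move=> H hD; have hn := DeltaP_nonneg hD.
set Rq := fun x y z => mXZ Q x z * mXY Q x y / mX Q x * (mYZ Q y z / (mY Q y * mZ Q z)).
have hR : forall x y z, 0 <= Rq x y z.
  move=> x y z; rewrite /Rq.
  have := mXZ_ge0 hn x z; have := mXY_ge0 hn x y; have := mX_ge0 hn x.
  have := mYZ_ge0 hn y z; have := mY_ge0 hn y; have := mZ_ge0 hn z.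
  move=> a1 a2 a3 a4 a5 a6.
  apply: Rmult_le_pos; apply: Rmult_le_pos; try nra;
    (case: (Req_dec (mX Q x) 0) => [->|?]; [rewrite Rinv_0; lra | apply: Rlt_le; apply: Rinv_0_lt_compat; nra])
    || (case: (Req_dec (mY Q y * mZ Q z) 0) => [->|?]; [rewrite Rinv_0; lra | apply: Rlt_le; apply: Rinv_0_lt_compat; nra]).
have hRp : forall x y z, 0 < Q x y z -> 0 < Rq x y z.
  move=> x y z hq; have [p1 [p2 [p3 [p4 [p5 p6]]]]] := pos_of hn hq; rewrite /Rq.
  apply: Rmult_lt_0_compat; apply: Rdiv_lt_0_compat; nra.
have hsumR : rsum3 Rq <= 1.
  have E : rsum3 Rq = rsum (fun y => rsum (fun z =>
       rsum (fun x => mXZ Q x z * mXY Q x y / mX Q x) * (mYZ Q y z / (mY Q y * mZ Q z)))).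
    rewrite /rsum3 rsum_exch; apply: rsum_ext => y; rewrite rsum_exch; apply: rsum_ext => z.
    by rewrite rsum_mulr.
  rewrite E -(DeltaP_total hD) total_YZ; apply: rsum_le => y; apply: rsum_le => z.
  have -> : rsum (fun x => mXZ Q x z * mXY Q x y / mX Q x) = mY Q y * mZ Q z.
    rewrite (DeltaP_Y hD) (DeltaP_Z hD) -H /mYZ; apply: rsum_ext => x.
    rewrite (proj1 (proj2 hD)) (proj2 (proj2 hD)) (DeltaP_X hD) /Q0.
    case: Rlt_dec => hx /=; first (rewrite /Rdiv; ring).
    have : mX P x = 0 by rewrite -(DeltaP_X hD) in hx *; have := mX_ge0 hn x; lra.
    by move=> ->; rewrite /Rdiv Rinv_0; ring.
  have := mYZ_ge0 hn y z => h.
  case: (Req_dec (mY Q y * mZ Q z) 0) => [->|hne].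
    rewrite Rmult_0_l; lra.
  right; have [h1 h2] : mY Q y <> 0 /\ mZ Q z <> 0 by split => h0; apply: hne; rewrite h0; ring.
  field; split; assumption.
have [G _] := @gibbs _ (fun t : TX * (TY * TZ) => Q t.1 t.2.1 t.2.2)
                    (fun t => Rq t.1 t.2.1 t.2.2)
                    (fun t => hn _ _ _) (fun t => hR _ _ _) (fun t => hRp _ _ _).
rewrite -!rsum3_pair in G. have Et : rsum3 Q = 1 by exact: (DeltaP_total hD). rewrite Et in G.
suff : CMI_XY_Z Q - MI_XY Q = rsum3 (fun x y z => Q x y z * ln (Q x y z / Rq x y z)).
  have G' : 1 - rsum3 Rq <= rsum3 (fun x y z => Q x y z * ln (Q x y z / Rq x y z)) by rewrite [X in _ <= X]rsum3_pair; exact: G.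
  rewrite /CoI; lra.
rewrite CMI_exp MI_XY_exp rsum3_minus; apply: rsum3_ext => x y z.
case: (Req_dec (Q x y z) 0) => [->|hq0]; first ring.
have hq : 0 < Q x y z by have := hn x y z; lra.
have [p1 [p2 [p3 [p4 [p5 p6]]]]] := pos_of hn hq.
have pA : 0 < Af Q x y z by rewrite /Af; apply: Rdiv_lt_0_compat; nra.
have pB : 0 < Bf Q x y by rewrite /Bf; apply: Rdiv_lt_0_compat; nra.
rewrite -Rmult_minus_distr_l -ln_div' //; congr (_ * ln _).
rewrite /Af /Bf /Rq; field; repeat repeat split; lra.
Qed.

End Info3.

From Stdlib Require Import Reals Lra.
Import GRing.Theory Num.Theory.
Local Open Scope R_scope.
Set Implicit Arguments. Unset Strict Implicit.

Section Info4.
Variables (TX TY TZ : finType).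
Implicit Types Q : jdist TX TY TZ.

Lemma MI_YZ_Q0 (P : jdist TX TY TZ) : is_dist P ->
  0 <= MI_YZ (Q0 P) /\
  (MI_YZ (Q0 P) = 0 -> forall y z, mYZ (Q0 P) y z = mY P y * mZ P z).
Proof.
move=> hP; set Q := Q0 P; have hD : DeltaP P Q := Q0_in hP.
have hn : nonnegQ Q := DeltaP_nonneg hD.
have hPn : nonnegQ P by case: hP.
set p := fun t : TY * TZ => mYZ Q t.1 t.2.
set q := fun t : TY * TZ => mY P t.1 * mZ P t.2.
have hp : forall t, 0 <= p t by move=> t; exact: mYZ_ge0.
have hq : forall t, 0 <= q t.
  move=> t; apply: Rmult_le_pos; [exact: mY_ge0 | exact: mZ_ge0].
have hpq : forall t, 0 < p t -> 0 < q t.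
  move=> [y z] /= hp0; rewrite /q /= -(DeltaP_Y hD) -(DeltaP_Z hD).
  have h1 : mYZ Q y z <= mY Q y.
    rewrite mY_YZ; apply: (@rsum_term _ (fun z => mYZ Q y z)) => w; exact: mYZ_ge0.
  have h2 : mYZ Q y z <= mZ Q z.
    rewrite mZ_YZ; apply: (@rsum_term _ (fun y => mYZ Q y z)) => w; exact: mYZ_ge0.
  rewrite /p /= in hp0; apply: Rmult_lt_0_compat; lra.
have [G1 G2] := @gibbs _ p q hp hq hpq.
have Ep : rsum p = 1.
  rewrite /p -(@rsum_pair _ _ (fun y z => mYZ Q y z)) -total_YZ; exact: (DeltaP_total hD).
have Eq : rsum q = 1.
  rewrite /q -(@rsum_pair _ _ (fun y z => mY P y * mZ P z)).
  transitivity (rsum (fun y => mY P y) * rsum (fun z => mZ P z)).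
    rewrite rsum_mulr; apply: rsum_ext => y; by rewrite rsum_mull.
  case: hP => _ h1; rewrite -total_Y -total_Z /totalQ h1; ring.
have EM : MI_YZ Q = rsum (fun t => p t * ln (p t / q t)).
  rewrite /MI_YZ -(@rsum_pair _ _ (fun y z => p (y, z) * ln (p (y, z) / q (y, z)))).
  apply: rsum_ext => y; apply: rsum_ext => z.
  by rewrite xlogE /p /q /= (DeltaP_Y hD) (DeltaP_Z hD).
rewrite EM; split; first lra.
move=> h0 y z; have := G2 ltac:(lra) (y, z); done.
Qed.

Lemma is_max_uniq (P : jdist TX TY TZ) v w : is_max_CoI P v -> is_max_CoI P w -> v = w.
Proof.
move=> [[Q1 [h1 e1]] m1] [[Q2 [h2 e2]] m2].
have := m1 _ h2; have := m2 _ h1; lra.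
Qed.

End Info4.

Unset Implicit Arguments. Set Strict Implicit.
From HB Require Import structures.
From mathcomp Require Import all_boot all_order all_algebra.
From mathcomp Require Import all_classical all_reals all_analysis.
From Stdlib Require Import Reals Lra.
From mathcomp Require Import Rstruct Rstruct_topology.
Import Order.TTheory GRing.Theory Num.Theory.
Import numFieldNormedType.Exports.
Local Open Scope classical_set_scope.

Lemma ln_cont (x : R) : (0 < x)%R -> {for x, continuous ln}.
Proof.
move=> hx; apply/continuity_pt_cvg.
apply: derivable_continuous_pt; exists (/ x)%R; exact: derivable_pt_lim_ln.
Qed.

Section Bounds.
Local Open Scope R_scope.

Lemma ln_le_sub1' u : 0 < u -> ln u <= u - 1.
Proof. move=> hu; have := exp_ineq1_le (ln u); rewrite exp_ln //; lra. Qed.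

Lemma xlnx_bound q : 0 < q -> - (q * ln q) <= 2 * sqrt q.
Proof.
move=> hq; set w := sqrt q.
have hw : 0 < w by apply: sqrt_lt_R0.
have hww : w * w = q by apply: sqrt_sqrt; lra.
have hiw : 0 < / w by apply: Rinv_0_lt_compat.
have h1 := ln_le_sub1' _ hiw; rewrite ln_Rinv // in h1.
have e : ln q = ln w + ln w by rewrite -hww ln_mult.
rewrite e -hww.
have : w * w * (- ln w) <= w * w * (/ w - 1) by apply: Rmult_le_compat_l; nra.
have : w * w * / w = w by field; lra.
nra.
Qed.

Lemma term_bound q m c d : 0 < d -> 0 < c -> 0 <= q -> q <= m -> m <= 1 ->
  Rabs (q * ln (q * c / (d * m))) <= 2 * sqrt q + q * Rabs (ln (c / d)).
Proof.
move=> hd hc hq hqm hm1.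
case: (Req_dec q 0) => [->|hq0].
  rewrite Rmult_0_l Rabs_R0 sqrt_0; lra.
have hq' : 0 < q by lra.
have hm : 0 < m by lra.
have e : q * c / (d * m) = (q / m) * (c / d) by field; lra.
have hqm' : 0 < q / m by apply: Rdiv_lt_0_compat.
have hcd : 0 < c / d by apply: Rdiv_lt_0_compat.
rewrite e ln_mult //.
have e2 : ln (q / m) = ln q - ln m.
  have hm' : 0 < / m by apply: Rinv_0_lt_compat.
  rewrite /Rdiv ln_mult // ln_Rinv //; lra.
have hlm : ln m <= 0 by have := ln_le_sub1' _ hm; lra.
have hlqm : ln (q / m) <= 0.
  have := ln_le_sub1' _ hqm'; have : q / m <= 1.
    apply: (Rmult_le_reg_r m) => //; field_simplify; lra.
  lra.
have hb := xlnx_bound _ hq'.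
have : - (q * ln (q / m)) <= 2 * sqrt q by rewrite e2; nra.
have : q * ln (q / m) <= 0 by nra.
move=> h1 h2.
have h3 := Rabs_triang (q * ln (q / m)) (q * ln (c / d)).
have h4 : Rabs (q * ln (q / m)) = - (q * ln (q / m)) by apply: Rabs_left1.
have h5 : Rabs (q * ln (c / d)) = q * Rabs (ln (c / d)).
  by rewrite Rabs_mult Rabs_right //; lra.
rewrite Rmult_plus_distr_l; lra.
Qed.
End Bounds.

Section T.
Context {U : Type} (F : set_system U) {FF : Filter F}.

Lemma term_cvg_pos (qf mf : U -> R) q0 m0 c d :
  (0 < d)%R -> (0 < c)%R -> (0 < q0)%R -> (0 < m0)%R ->
  qf @ F --> q0 -> mf @ F --> m0 ->
  (fun u => qf u * ln (qf u * c / (d * mf u)))%R @ F --> (q0 * ln (q0 * c / (d * m0)))%R.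
Proof.
move=> hd hc hq hm Hq Hm.
have H1 : (fun u => qf u * c / (d * mf u))%R @ F --> (q0 * c / (d * m0))%R.
  apply: cvgM; first exact: cvgMr_tmp.
  apply: cvgV. apply/eqP => h. have h0 : (0 < d * m0)%R by nra. change (d * m0 = 0)%R in h. lra.
  exact: cvgMl_tmp.
apply: cvgM => //.
apply: continuous_cvg => //.
apply: ln_cont.
apply: Rdiv_lt_0_compat; nra.
Qed.

Lemma term_cvg_zero (qf mf : U -> R) m0 c d :
  (0 < d)%R -> (0 < c)%R -> qf @ F --> 0%R ->
  (\forall u \near F, 0 <= qf u /\ qf u <= mf u /\ mf u <= 1)%R ->
  (fun u => qf u * ln (qf u * c / (d * mf u)))%R @ F --> (0 * ln (0 * c / (d * m0)))%R.
Proof.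
move=> hd hc Hq Hb.
rewrite Rmult_0_l.
apply/(@cvgrPdist_lt _ R^o) => e /RltP he0.
have he : Rlt 0 e by exact: he0.
set L := Rabs (ln (c / d)).
have hL : (0 <= L)%R by apply: Rabs_pos.
set dl := Rmin (e * e / 16) (e / (2 * (L + 1))).
have hdl : (0 < dl)%R.
  apply: Rmin_glb_lt; apply: Rdiv_lt_0_compat; nra.
move/(@cvgrPdist_lt _ R^o): Hq => /(_ dl (introT RltP hdl)) Hn.
apply: filterS2 Hb Hn => u [h1 [h2 h3]] /RltP hn.
apply/RltP.
change (Rlt (Rabs (Rplus 0 (Ropp (qf u * ln (qf u * c / (d * mf u)))))) e).
rewrite Rplus_0_l Rabs_Ropp.
change (Rabs (0 - qf u) < dl)%R in hn.
rewrite Rminus_0_l Rabs_Ropp in hn *.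
rewrite Rabs_right in hn; last lra.
have hb := term_bound (qf u) (mf u) c d hd hc h1 h2 h3.
have hs : (sqrt (qf u) < e / 4)%R.
  have : (qf u < e * e / 16)%R by have : (dl <= e * e / 16)%R := Rmin_l _ _; lra.
  move=> hlt; rewrite -(sqrt_Rsqr (e / 4)); last lra.
  apply: sqrt_lt_1_alt; split; first lra.
  rewrite /Rsqr; lra.
have hq2 : (qf u * L <= e / 2 * (L / (L + 1)))%R.
  have : (qf u < e / (2 * (L + 1)))%R by have : (dl <= e / (2 * (L + 1)))%R := Rmin_r _ _; lra.
  move=> hlt.
  have -> : (e / 2 * (L / (L + 1)) = (e / (2 * (L + 1))) * L)%R by field; lra.
  apply: Rmult_le_compat_r; lra.
have hLL : (L / (L + 1) < 1)%R.
  apply: (Rmult_lt_reg_r (L + 1)); first lra.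
  field_simplify; lra.
have : (e / 2 * (L / (L + 1)) < e / 2)%R.
  have := Rmult_lt_compat_l (e / 2) _ _ ltac:(lra) hLL; lra.
rewrite -/L in hb; lra.
Qed.
End T.

From Stdlib Require Import Reals Lra.
Import Order.TTheory GRing.Theory Num.Theory.
Import numFieldNormedType.Exports.
Local Open Scope classical_set_scope.

Lemma cvg_rsum {U : Type} (F : set_system U) {FF : Filter F} (A : finType)
  (h : A -> U -> R) (l : A -> R) :
  (forall a, h a @ F --> l a) -> (fun u => rsum (fun a => h a u)) @ F --> rsum l.
Proof.
move=> H; rewrite /rsum.
elim: (index_enum A) => [|a s IH].
  rewrite big_nil.
  have -> : (fun u => \big[Rplus/R0]_(a <- [::]) h a u) = (fun _ => R0).
    by apply: funext => u; rewrite big_nil.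
  exact: cvg_cst.
rewrite big_cons.
have -> : (fun u => \big[Rplus/R0]_(i <- a :: s) h i u) =
          (fun u => h a u + \big[Rplus/R0]_(i <- s) h i u)%R.
  by apply: funext => u; rewrite big_cons.
apply: (@cvgD _ R^o) => //; exact: H.
Qed.

Lemma closure_constr {U : topologicalType} (A B : set U) :
  A `<=` B -> closed B -> closure A `<=` B.
Proof. move=> AB /closure_id cB; apply: subset_trans (closureS AB) _; by rewrite -cB. Qed.

Lemma closed_preim_eq {U : topologicalType} (g : U -> R) c :
  continuous g -> closed [set u | g u = c].
Proof.
move=> hg; have := @preimage_closed _ _ g [set x : R | x = c].
by apply => [x _|]; [exact: hg | exact: closed_eq].
Qed.

Lemma closed_preim_ge0 {U : topologicalType} (g : U -> R) :
  continuous g -> closed [set u | Rle 0 (g u)].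
Proof.
move=> hg.
have hc : closed [set x : R | Rle 0 x].
  have := @closed_ge R 0; congr closed; apply: funext => x; apply: propext.
  by split => h; apply/RleP.
have -> : [set u | Rle 0 (g u)] = g @^-1` [set x : R | Rle 0 x] by [].
apply: preimage_closed => [x _|//]; exact: hg.
Qed.

Local Open Scope R_scope.
Section Exist.
Variables (TX TY TZ : finType) (P : jdist TX TY TZ).
Hypothesis hP : is_dist P.

Let T := (TX * TY * TZ)%type.
Let S := {ptws T -> R}.
Definition toQ (f : S) : jdist TX TY TZ := fun x y z => f (x, y, z).
Let K : set S := [set f | DeltaP P (toQ f)].

Lemma cont_proj (t : T) : continuous (fun f : S => f t).
Proof. exact: (@proj_continuous T (fun _ => R) t). Qed.

Lemma cont_rsumS (A : finType) (h : A -> S -> R) :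
  (forall a, continuous (h a)) -> continuous (fun f => rsum (fun a => h a f)).
Proof. move=> H f; apply: cvg_rsum => a; exact: H. Qed.

Lemma K_closed : closed K.
Proof.
move=> f clf.
have step : forall (g : S -> R) c, continuous g -> (forall h, K h -> g h = c) -> g f = c.
  move=> g c hg hK.
  have H1 := @closure_constr _ K [set u | g u = c] hK (closed_preim_eq g c hg). exact: H1 clf.
have contQ : forall x y z, continuous (fun f : S => toQ f x y z).
  by move=> x y z; exact: cont_proj.
split; [split|split].
- move=> x y z.
  have H1 := @closure_constr _ K [set u | Rle 0 (toQ u x y z)]
           (fun h (hh : K h) => (DeltaP_nonneg hh) x y z)
           (closed_preim_ge0 _ (contQ x y z)).
  exact: H1 clf.
- apply: (step (fun f => totalQ (toQ f))).
    do 3 (apply: cont_rsumS => ?); exact: contQ.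
  by move=> h hh; exact: (DeltaP_total hh).
- move=> x y; apply: (step (fun f => mXY (toQ f) x y)).
    apply: cont_rsumS => ?; exact: contQ.
  by move=> h [_ [hh _]]; exact: hh.
- move=> x z; apply: (step (fun f => mXZ (toQ f) x z)).
    apply: cont_rsumS => ?; exact: contQ.
  by move=> h [_ [_ hh]]; exact: hh.
Qed.

Lemma K_le1 (f : S) : K f -> forall t, Rle 0 (f t) /\ Rle (f t) 1.
Proof.
move=> hK [[x y] z]; have hn := DeltaP_nonneg hK.
split; first exact: hn.
have h1 := le_mXY hn x y z; have h2 := le_mX hn x y.
have h3 : Rle (mX (toQ f) x) (totalQ (toQ f)).
  rewrite total_X; apply: (@rsum_term _ (fun x => mX (toQ f) x)) => w; exact: mX_ge0.
have := DeltaP_total hK; rewrite /toQ /= in h1 h2 h3 *; lra.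
Qed.

Lemma K_compact : compact.compact K.
Proof.
have hC := @tychonoff T (fun _ => R) (fun _ => `[R0, R1]%classic) (fun _ => @segment_compact R R0 R1).
apply: (subclosed_compact K_closed hC).
move=> f hf t /=; have [h0 h1] := @K_le1 f hf t.
rewrite in_itv /=; apply/andP; split; exact/RleP.
Qed.

Lemma K_bounds (f : S) : K f -> forall x y z,
  Rle 0 (toQ f x y z) /\ Rle (toQ f x y z) (mYZ (toQ f) y z) /\
  Rle (mYZ (toQ f) y z) 1 /\ Rle (toQ f x y z) (mXZ P x z).
Proof.
move=> hK x y z; have hn := DeltaP_nonneg hK.
have h1 := le_mYZ hn x y z.
have h2 : Rle (mYZ (toQ f) y z) (mY (toQ f) y).
  rewrite mY_YZ; apply: (@rsum_term _ (fun z => mYZ (toQ f) y z)) => w; exact: mYZ_ge0.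
have h3 : Rle (mY (toQ f) y) (totalQ (toQ f)).
  rewrite total_Y; apply: (@rsum_term _ (fun y => mY (toQ f) y)) => w; exact: mY_ge0.
have h4 := le_mXZ hn x y z.
have e1 := DeltaP_total hK.
have e2 : mXZ (toQ f) x z = mXZ P x z by case: hK => _ [_ h]; exact: h.
split; first exact: hn.
split; first exact: h1.
split; first lra.
rewrite -e2; exact: h4.
Qed.

Definition cmi' (f : S) : R :=
  rsum3 (fun x y z => toQ f x y z * ln (toQ f x y z * mZ P z / (mXZ P x z * mYZ (toQ f) y z))).
Definition Gf (f : S) : R := MI_XY P - cmi' f.

Lemma Gf_eq (f : S) : K f -> Gf f = CoI (toQ f).
Proof.
move=> hK; rewrite /Gf /CoI.
have e1 : MI_XY (toQ f) = MI_XY P.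
  rewrite /MI_XY; apply: rsum_ext => x; apply: rsum_ext => y.
  by rewrite (DeltaP_X hK) (DeltaP_Y hK) (proj1 (proj2 hK)).
have e2 : CMI_XY_Z (toQ f) = cmi' f.
  rewrite CMI_exp /cmi'; apply: rsum3_ext => x y z.
  by rewrite /Af (DeltaP_Z hK) (proj2 (proj2 hK)).
by rewrite e1 e2.
Qed.

Lemma Gf_cont : {within K, continuous Gf}.
Proof.
apply/subspace_continuousP => f0 Kf0.
have HK : within K (nbhs f0) K.
  rewrite /within /=; apply: filterE => f hf; exact: hf.
apply: (@cvgB _ R^o); first exact: cvg_cst.
rewrite /cmi' /rsum3.
apply: cvg_rsum => x; apply: cvg_rsum => y; apply: cvg_rsum => z.
have Hq : (fun f : S => toQ f x y z) @ within K (nbhs f0) --> toQ f0 x y z.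
  apply: cvg_within_filter; exact: cont_proj.
have Hm : (fun f : S => mYZ (toQ f) y z) @ within K (nbhs f0) --> mYZ (toQ f0) y z.
  apply: cvg_within_filter; apply: cont_rsumS => x'; exact: cont_proj.
have hPn : nonnegQ P by case: hP.
have hd0 : 0 <= mXZ P x z := mXZ_ge0 hPn x z.
have [b1 [b2 [b3 b4]]] := @K_bounds f0 Kf0 x y z.
have HB : within K (nbhs f0) (fun f => Rle 0 (toQ f x y z) /\
    Rle (toQ f x y z) (mYZ (toQ f) y z) /\ Rle (mYZ (toQ f) y z) 1).
  apply: filterS HK => f hf; have := @K_bounds f hf x y z; tauto.
case: (Req_dec (mXZ P x z) 0) => hd.
  have e0 : toQ f0 x y z = 0 by lra.
  rewrite e0 Rmult_0_l; apply: cvg_near_cst; apply: filterS HK => f hf.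
  have := @K_bounds f hf x y z => hb.
  have -> : toQ f x y z = 0 by lra.
  exact: Rmult_0_l.
have hdp : 0 < mXZ P x z by lra.
have hc : 0 < mZ P z by have := le_mZ hPn x z; lra.
case: (Req_dec (toQ f0 x y z) 0) => hq.
  rewrite hq; apply: (term_cvg_zero _ _ _ _ _ _ hdp hc) => //.
  by rewrite -hq.
apply: term_cvg_pos => //; lra.
Qed.

Lemma exists_max : exists Q, DeltaP P Q /\ forall Q', DeltaP P Q' -> CoI Q' <= CoI Q.
Proof.
have ne : K !=set0.
  by exists (fun t : T => Q0 P t.1.1 t.1.2 t.2); exact: Q0_in hP.
have [c cK cmax] := compact_EVT_max ne K_compact Gf_cont.
have Kc : K c by rewrite inE in cK.
exists (toQ c); split; first exact: Kc.
move=> Q' hQ'.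
pose f' : S := fun t => Q' t.1.1 t.1.2 t.2.
have Kf' : K f' by exact: hQ'.
have := cmax f' (mem_set Kf'); rewrite (@Gf_eq f' Kf') (@Gf_eq c Kc) => /RleP.
done.
Qed.

End Exist.

From Stdlib Require Import Lra ClassicalEpsilon.
Theorem mainTheorem6 (TX TY TZ : finType) (P : jdist TX TY TZ) (hP : is_dist P) :
  DeltaP P (Q0 P) /\ (SItilde P = 0%R <-> MI_YZ (Q0 P) = 0%R).
Proof.
have hD := Q0_in hP.
split => //.
have [Qs [hQs hmax]] := @exists_max TX TY TZ P hP.
have hS : is_max_CoI P (SItilde P).
  rewrite /SItilde; apply: epsilon_spec; exists (CoI Qs); split => //.
  by exists Qs.
have E1 := CoI_Q0 hP; have [G1 G2] := MI_YZ_Q0 hP.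
case: hS => [[Q1 [hQ1 e1]] hS2].
split.
- move=> h0; have := hS2 _ hD; rewrite h0 E1 => h; lra.
- move=> h0; have H := G2 h0.
  have := CoI_le0 H hQ1; have := hS2 _ hD; rewrite E1 h0 e1; lra.
Qed.
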